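(* Let $1\le r\le n$ and let $\mathsf{X}\in\mathbb{R}^{n\times r}$ have unit-norm, linearly independent columns. Let $Y$ be the random subset of $\{1,\dots,n\}$ associated with $|\mathrm{columns}(\mathsf{X})\rangle$, as defined in the context. Then, for every $\mathtt{C}\subseteq\{1,\dots,n\}$ with $|\mathtt{C}|=r$, $$\mathbb{P}\big(Y=\mathtt{C}\,\big|\,|Y|=r\big)=\frac{|\det \mathsf{X}_{\mathtt{C}:}|^2}{\det(\mathsf{X}^\top\mathsf{X})}.$$
   Context: Work in $(\mathbb{C}^2)^{\otimes n}$ with computational basis $|b_1\dots b_n\rangle$, $b_i\in\{0,1\}$, where $|0\rangle=(1,0)^\top$ and $|1\rangle=(0,1)^\top$. For $1\le j\le n$, let $c_j=\sigma_z^{\otimes(j-1)}\otimes|0\rangle\langle 1|\otimes I^{\otimes(n-j)}$, with $\sigma_z=\mathrm{diag}(1,-1)$ and $I$ the $2\times2$ identity. Let $c_j^*$ be its adjoint. The vacuum is $|\emptyset\rangle=|0\cdots0\rangle$. For a unit vector $x\in\mathbb{R}^n$, the Clifford loader is $\mathcal{C}(x)=\sum_{i=1}^n x_i(c_i+c_i^* )$; it is a unitary. For $\mathsf{X}\in\mathbb{R}^{n\times r}$ with unit-norm columns $\mathsf{X}_{:1},\dots,\mathsf{X}_{:r}$, set $|\mathrm{columns}(\mathsf{X})\rangle=\mathcal{C}(\mathsf{X}_{:1})\cdots\mathcal{C}(\mathsf{X}_{:r})|\emptyset\rangle$. The associated random subset $Y\subseteq\{1,\dots,n\}$ has law $\mathbb{P}(Y=\mathtt{C})=|\langle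 e_{\mathtt{C}}|\mathrm{columns}(\mathsf{X})\rangle|^2$, where $|e_{\mathtt{C}}\rangle=|b_1\dots b_n\rangle$ with $b_i=1$ iff $i\in\mathtt{C}$. This is the Born-rule outcome of measuring the occupation numbers $N_i=c_i^*c_i$. For $\mathtt{C}$ with $|\mathtt{C}|=r$, $\mathsf{X}_{\mathtt{C}:}$ is the $r\times r$ submatrix of $\mathsf{X}$ with rows indexed by $\mathtt{C}$. *)

(* Defs.v *)
From mathcomp Require Import all_boot all_order all_algebra.
Set Implicit Arguments. Unset Strict Implicit. Unset Printing Implicit Defensive.
Import Order.TTheory GRing.Theory Num.Theory.
Local Open Scope ring_scope.

(* The computational basis |b_1 ... b_n> of (C^2)^{(x)n} is indexed by the
   subset C = {i | b_i = 1} of 'I_n (0-based positions).  All operators below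
   have real entries (X is real), so we work over a real field R; the adjoint
   is then the transpose and |amplitude|^2 = amplitude^2. *)

Section Fock.
Variables (R : realFieldType) (n : nat).

Definition fstate := {set 'I_n} -> R.
Definition fop := {set 'I_n} -> {set 'I_n} -> R.

Definition fapply (A : fop) (v : fstate) : fstate :=
  fun C => \sum_(D : {set 'I_n}) A C D * v D.

Definition fadj (A : fop) : fop := fun C D => A D C.

(* c_j = sigma_z^{(x)(j-1)} (x) |0><1| (x) I^{(x)(n-j)}, written entrywise:
   <e_C| c_j |e_D> = (-1)^{#{i in C, i < j}} if j \notin C and D = C u {j},
   and 0 otherwise. *)
Definition annih (j : 'I_n) : fop := fun C D =>
  if (j \notin C) && (D == j |: C)
  then (-1) ^+ #|[set i in C | (i < j)%N]| else 0.

Definition clifford (x : 'I_n -> R) : fop :=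
  fun C D => \sum_(i < n) x i * (annih i C D + fadj (annih i) C D).

Definition vacuum : fstate := fun C => if C == set0 then 1 else 0.

Definition columns_state (r : nat) (X : 'M[R]_(n, r)) : fstate :=
  foldr (fun j v => fapply (clifford (fun i => X i j)) v) vacuum (enum 'I_r).

Definition born_prob (r : nat) (X : 'M[R]_(n, r)) (C : {set 'I_n}) : R :=
  (columns_state X C) ^+ 2.

Definition cond_prob_size (r : nat) (X : 'M[R]_(n, r)) (k : nat)
  (C : {set 'I_n}) : R :=
  (if #|C| == k then born_prob X C else 0)
  / \sum_(D : {set 'I_n} | #|D| == k) born_prob X D.

(* X_{C:} : the r x r submatrix of rows indexed by C, in increasing order *)
Definition row_submx (r : nat) (X : 'M[R]_(n, r)) (C : {set 'I_n})
  (HC : #|C| = r) : 'M[R]_r :=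
  \matrix_(i < r, j < r) X (enum_val (cast_ord (esym HC) i)) j.

End Fock.

(* Main.v *)
Require Import Defs.
From mathcomp Require Import all_boot all_order all_algebra.
From mathcomp Require Import fingroup perm.
Import GRing.Theory Num.Theory.
Local Open Scope ring_scope.
Set Implicit Arguments. Unset Strict Implicit. Unset Printing Implicit Defensive.

Lemma enum_val_mono (n : nat) (D : {set 'I_n}) (a b : 'I_#|D|) :
  (a < b)%N -> (enum_val a < enum_val b)%N.
Proof.
move=> ab.
have tr : transitive (relpre (@nat_of_ord n) ltn).
  by move=> x y z /= ; apply: ltn_trans.
have srt0 : sorted ltn [seq val i | i <- enum 'I_n].
  by rewrite val_enum_ord iota_ltn_sorted.
have e : enum D = [seq x <- enum 'I_n | x \in D].
  by rewrite enumT /enum_mem; apply: eq_filter => x; rewrite !inE.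
have srt : sorted (relpre (@nat_of_ord n) ltn) (enum D).
  by rewrite e; apply: (sorted_filter tr); move: srt0; rewrite sorted_map.
have x0 : 'I_n := enum_val a.
rewrite !(enum_val_nth x0).
apply: (sorted_ltn_nth tr x0 srt) => //=.
- by rewrite inE -cardE.
- by rewrite inE -cardE.
Qed.

Lemma card_ord_lt (m a : nat) : (a <= m)%N -> #|[set b : 'I_m | (b < a)%N]| = a.
Proof.
move=> am.
have -> : [set b : 'I_m | (b < a)%N] = [set widen_ord am b | b in 'I_a].
  apply/setP => b; rewrite !inE; apply/idP/imsetP => [ba|[c _ ->]] //=.
  by exists (Ordinal ba) => //; apply: val_inj.
by rewrite card_imset ?card_ord //; move=> x y /(congr1 val) /= e; apply: val_inj.
Qed.

Definition rk (n : nat) (D : {set 'I_n}) (y : 'I_n) := #|[set k in D | (k < y)%N]|.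

Lemma rk_enum_val (n : nat) (D : {set 'I_n}) (a : 'I_#|D|) : rk D (enum_val a) = a.
Proof.
rewrite /rk.
have -> : [set k in D | (k < enum_val a)%N] =
          [set enum_val b | b in [set b : 'I_#|D| | (b < a)%N]].
  apply/setP => k; rewrite !inE; apply/andP/imsetP => [[kD lt]|[b]].
    exists (enum_rank_in kD k); last by rewrite enum_rankK_in.
    rewrite inE ltnNge; apply/negP => le.
    move: lt; rewrite -{1}(enum_rankK_in kD kD).
    rewrite leq_eqVlt in le; case/orP: le => [/eqP/val_inj <-|/enum_val_mono le].
      by rewrite ltnn.
    by move=> lt; have := ltn_trans lt le; rewrite ltnn.
  rewrite inE => ba ->; split; first exact: enum_valP.
  exact: enum_val_mono.
by rewrite card_imset ?card_ord_lt //; [apply: ltnW | apply: enum_val_inj].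
Qed.

Lemma rk_inj (n : nat) (D : {set 'I_n}) (y z : 'I_n) :
  y \in D -> z \in D -> rk D y = rk D z -> y = z.
Proof.
move=> yD zD e.
rewrite -(enum_rankK_in yD yD) -(enum_rankK_in zD zD); congr enum_val.
apply: val_inj; by rewrite /= -rk_enum_val -[RHS]rk_enum_val !enum_rankK_in.
Qed.

Lemma rk_setD1 (n : nat) (D : {set 'I_n}) (x y : 'I_n) :
  rk (D :\ x) y = (rk D y - ((x \in D) && (x < y)%N))%N.
Proof.
rewrite /rk.
have -> : [set k in D :\ x | (k < y)%N] = [set k in D | (k < y)%N] :\ x.
  by apply/setP => k; rewrite !inE andbA.
rewrite (cardsD1 x [set k in D | (k < y)%N]) !inE.
by case: (_ && _) => //=; rewrite ?subn0 // add1n subn1.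
Qed.

Lemma fapply_clifford (R : realFieldType) (n : nat) (x : 'I_n -> R) (v : fstate R n)
  (D : {set 'I_n}) :
  fapply (clifford x) v D = \sum_(i < n) x i *
    ((if i \in D then 0 else (-1) ^+ rk D i * v (i |: D)) +
     (if i \in D then (-1) ^+ rk D i * v (D :\ i) else 0)).
Proof.
rewrite /fapply /clifford.
under eq_bigr do rewrite big_distrl.
rewrite exchange_big /=; apply: eq_bigr => i _.
under eq_bigr do rewrite -mulrA mulrDl.
rewrite -big_distrr big_split /=; congr (_ * (_ + _)).
- rewrite (bigD1 (i |: D)) //= big1 ?addr0 => [|E /negbTE nE].
    by rewrite /annih eqxx andbT; case: (i \in D) => //=; rewrite mul0r.
  by rewrite /annih nE andbF mul0r.
- rewrite (bigD1 (D :\ i)) //= big1 ?addr0 => [|E nE].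
    rewrite /fadj /annih !inE eqxx /=.
    case iD: (i \in D).
      by rewrite setD1K // eqxx; have := rk_setD1 D i i; rewrite /rk => ->; rewrite iD ltnn subn0.
    suff -> : (D == i |: D :\ i) = false by rewrite mul0r.
    apply/negbTE/eqP => e; move: iD; rewrite e !inE eqxx //.
  rewrite /fadj /annih.
  case iE: (i \in E) => /=; first by rewrite mul0r.
  case: eqP => [e|_]; last by rewrite mul0r.
  by move: nE; rewrite e setU1K ?iE // eqxx.
Qed.

Lemma rk_mono (n : nat) (D : {set 'I_n}) (y z : 'I_n) :
  y \in D -> (y < z)%N -> (rk D y < rk D z)%N.
Proof.
move=> yD yz; rewrite /rk; apply: proper_card; rewrite properE; apply/andP; split.
  by apply/subsetP => k; rewrite !inE => /andP[-> /ltn_trans ->].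
by apply/subsetPn; exists y; rewrite !inE ?yD ?yz ?ltnn.
Qed.

Section St.
Variables (R : realFieldType) (n : nat).

Definition st (s : seq ('I_n -> R)) : fstate R n :=
  foldr (fun x v => fapply (clifford x) v) (@vacuum R n) s.

Lemma st_high s (D : {set 'I_n}) : (size s < #|D|)%N -> st s D = 0.
Proof.
elim: s D => [|x s IH] D /=.
  by rewrite /vacuum; case: eqP => // ->; rewrite cards0.
move=> lt; rewrite fapply_clifford big1 // => i _.
case iD: (i \in D).
  rewrite IH ?mulr0 ?addr0 ?mulr0 //.
  by move: lt; rewrite (cardsD1 i D) iD add1n ltnS.
rewrite IH ?mulr0 ?add0r ?mulr0 //.
by rewrite cardsU1 iD add1n ltnW // ltnS ltnW.
Qed.


Lemma st_top (s : seq ('I_n -> R)) (D : {set 'I_n}) (e : 'I_(size s) -> 'I_n) :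
  #|D| = size s -> (forall a, e a \in D) -> (forall a, rk D (e a) = a) ->
  st s D = \det (\matrix_(a, b) (nth (fun _ => 0) s b) (e a)).
Proof.
elim: s D e => [|x s IH] D e /= cD eD re.
  rewrite det_mx00 /vacuum; move/eqP: cD; rewrite cards_eq0 => /eqP ->.
  by rewrite eqxx.
have einj : injective e.
  by move=> a b ab; apply: val_inj; rewrite /= -(re a) -(re b) ab.
have mono : forall a b : 'I_(size s).+1, (a < b)%N -> (e a < e b)%N.
  move=> a b ab; case: (ltngtP (e a) (e b)) => // [lt|eq].
    by move: ab; rewrite -(re a) -(re b) ltnNge ltnW // rk_mono.
  by move: ab; rewrite -(re a) -(re b) /rk (val_inj eq) ltnn.
have em : forall b c, (e b < e c)%N = (b < c)%N.
  move=> b c; case: (ltngtP b c) => [lt|lt|eq]; first exact: mono.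
    by apply/negbTE; rewrite -leqNgt ltnW // mono.
  by rewrite (val_inj eq) ltnn.
have De : D = e @: setT.
  apply/eqP; rewrite eq_sym eqEcard; apply/andP; split.
    by apply/subsetP => y /imsetP[a _ ->].
  by rewrite card_imset // cardsT card_ord cD.
rewrite fapply_clifford (expand_det_col _ ord0).
rewrite (bigID (fun i => i \in D)) /= [X in _ + X]big1 ?addr0; last first.
  move=> i /negbTE iD; rewrite iD st_high ?mulr0 ?addr0 ?mulr0 //.
  by rewrite cardsU1 iD cD.
rewrite De big_imset /=; last by move=> a b _ _; apply: einj.
rewrite -De; apply: eq_big => [a|a _]; first by rewrite inE.
rewrite eD add0r mxE /cofactor addn0 re; congr (_ * (_ * _)).
rewrite (IH (D :\ e a) (fun a' => e (lift a a'))) //.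
- congr (\det _); apply/matrixP => i j; rewrite !mxE.
  by rewrite lift0.
- by move: cD; rewrite (cardsD1 (e a)) eD add1n => -[].
- move=> a'; rewrite !inE eD andbT; apply/negP => /eqP /einj.
  by move=> /eqP; rewrite eq_sym (negbTE (neq_lift a a')).
- move=> a'; rewrite rk_setD1 eD re /= em /=.
  rewrite /bump; case: (leqP a a') => h /=.
  + by rewrite add1n ltnS h subn1.
  + by rewrite add0n ltnNge ltnW // subn0.
Qed.
End St.

Lemma cb_expand (R : comNzRingType) (r n : nat) (A : 'M[R]_(r, n)) (B : 'M[R]_(n, r)) :
  \det (A *m B) = \sum_(f : {ffun 'I_r -> 'I_n})
     (\prod_i A i (f i)) * \det (\matrix_(i, j) B (f i) j).
Proof.
rewrite /determinant.
transitivity (\sum_(s : 'S_r) \sum_(f : {ffun 'I_r -> 'I_n})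
   (-1) ^+ s * \prod_i (A i (f i) * B (f i) (s i))).
  apply: eq_bigr => s _; rewrite -big_distrr /=; congr (_ * _).
  rewrite -(bigA_distr_bigA (fun i k => A i k * B k (s i))) /=.
  by apply: eq_bigr => i _; rewrite mxE.
rewrite exchange_big /=; apply: eq_bigr => f _.
rewrite big_distrr /=; apply: eq_bigr => s _.
rewrite big_split /= mulrCA; congr (_ * (_ * _)).
by apply: eq_bigr => i _; rewrite mxE.
Qed.

Lemma cb_group (R : comNzRingType) (r n : nat) (X : 'M[R]_(n, r)) (i0 : 'I_n) :
  \det (X^T *m X) = \sum_(D : {set 'I_n} | #|D| == r)
      (\det (\matrix_(a < r, j < r) X (nth i0 (enum D) a) j)) ^+ 2.
Proof.
rewrite cb_expand.
rewrite (bigID (fun f : {ffun 'I_r -> 'I_n} => injectiveb f)) /=.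
rewrite [X in _ + X]big1 ?addr0; last first.
  move=> f /injectivePn [i1 [i2 Di12 Ef12]].
  by rewrite (determinant_alternate Di12) ?mulr0 //= => j; rewrite !mxE Ef12.
rewrite (partition_big (fun f : {ffun 'I_r -> 'I_n} => [set f i | i in 'I_r])
           (fun D : {set 'I_n} => #|D| == r)) /=; last first.
  by move=> f /injectiveP fi; rewrite card_imset // card_ord.
apply: eq_bigr => D /eqP cD.
pose e (a : 'I_r) := nth i0 (enum D) a.
have sz : size (enum D) = r by rewrite -cardE.
have eD : forall a, e a \in D.
  by move=> a; rewrite -mem_enum mem_nth // sz.
have einj : injective e.
  move=> a b /eqP; rewrite /e nth_uniq ?sz // ?enum_uniq // => /eqP.
  exact: val_inj.
pose h (p : 'S_r) := [ffun i => e (p i)].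
have hinj : injective h.
  move=> p q /ffunP hpq; apply/permP => i; apply: einj.
  by have := hpq i; rewrite !ffunE.
have imD : forall p : 'S_r, [set h p i | i in 'I_r] = D.
  move=> p; apply/eqP; rewrite eqEcard; apply/andP; split.
    by apply/subsetP => y /imsetP [i _ ->]; rewrite ffunE.
  rewrite card_imset ?card_ord ?cD //.
  by move=> i j; rewrite !ffunE => /einj /perm_inj.
have -> : \sum_(f : {ffun 'I_r -> 'I_n} | injectiveb f && ([set f i | i in 'I_r] == D))
      (\prod_i X^T i (f i)) * \det (\matrix_(i, j) X (f i) j) =
    \sum_(f in h @: setT)
      (\prod_i X^T i (f i)) * \det (\matrix_(i, j) X (f i) j).
  apply: eq_bigl => f; apply/andP/imsetP => [[/injectiveP fi /eqP fD]|[p _ ->]].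
    have fiD : forall i, f i \in enum D.
      by move=> i; rewrite mem_enum -fD; apply: imset_f.
    have gP : forall i, (index (f i) (enum D) < r)%N.
      by move=> i; have := fiD i; rewrite -index_mem sz.
    pose g i := Ordinal (gP i).
    have ginj : injective g.
      move=> i j /(congr1 val) /= eij; apply: fi.
      by rewrite -(nth_index i0 (fiD i)) eij nth_index.
    exists (perm ginj) => //; apply/ffunP => i.
    by rewrite !ffunE permE /e /= nth_index.
  split; last by rewrite imD.
  by apply/injectiveP => i j; rewrite !ffunE => /einj /perm_inj.
rewrite big_imset /=; last by move=> p q _ _; apply: hinj.
pose M := \matrix_(a < r, j < r) X (e a) j.
transitivity (\sum_(p : 'S_r) \det M * ((-1) ^+ p * \prod_i M^T i (p i))).
  apply: eq_big => [p|p _]; first by rewrite inE.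
  have -> : \matrix_(i, j) X (h p i) j = row_perm p M.
    by apply/matrixP => i j; rewrite !mxE ffunE.
  have -> : \prod_i X^T i (h p i) = \prod_i M^T i (p i).
    by apply: eq_bigr => i _; rewrite !mxE ffunE.
  by rewrite row_permE det_mulmx det_perm mulrC -mulrA [RHS]mulrCA.
by rewrite -big_distrr /= -/(determinant M^T) det_tr.
Qed.

Lemma st_top' (R : realFieldType) (n k : nat) (s : seq ('I_n -> R)) (Hs : size s = k)
  (D : {set 'I_n}) (e : 'I_k -> 'I_n) :
  #|D| = k -> (forall a, e a \in D) -> (forall a, rk D (e a) = a) ->
  st s D = \det (\matrix_(a < k, b < k) (nth (fun _ => 0) s b) (e a)).
Proof. by subst k; apply: st_top. Qed.

Lemma cs_det (R : realFieldType) (n r : nat) (X : 'M[R]_(n, r)) (D : {set 'I_n})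
  (e : 'I_r -> 'I_n) :
  #|D| = r -> (forall a, e a \in D) -> (forall a, rk D (e a) = a) ->
  columns_state X D = \det (\matrix_(a < r, b < r) X (e a) b).
Proof.
move=> cD eD re.
have -> : columns_state X D =
   st [seq (fun i => X i j) | j <- enum 'I_r] D by rewrite /columns_state /st foldr_map.
rewrite (@st_top' R n r _ _ D e) ?size_map ?size_enum_ord //.
congr (\det _); apply/matrixP => a b; rewrite !mxE.
rewrite (nth_map b); last by rewrite size_enum_ord.
by rewrite nth_ord_enum. by rewrite -enumT size_enum_ord.
Qed.

Theorem mainTheorem1 (R : realFieldType) (n r : nat) (X : 'M[R]_(n, r))
  (Hr1 : (1 <= r)%N) (Hrn : (r <= n)%N)
  (Hunit : forall j : 'I_r, \sum_(i < n) X i j ^+ 2 = 1)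
  (Hindep : \rank X = r)
  (C : {set 'I_n}) (HC : #|C| = r) :
  cond_prob_size X r C = (\det (row_submx X HC)) ^+ 2 / \det (X^T *m X).
Proof.
have i0 : 'I_n := Ordinal (leq_trans Hr1 Hrn).
rewrite /cond_prob_size HC eqxx /born_prob.
rewrite (cb_group X i0); congr (_ ^+ 2 / _).
  apply: cs_det => // a; first exact: enum_valP.
  by rewrite rk_enum_val.
apply: eq_bigr => D /eqP cD; congr (_ ^+ 2); apply: cs_det => // a.
  by rewrite -mem_enum mem_nth // -cardE cD.
have aD : (a < #|D|)%N by rewrite cD.
by rewrite -(enum_val_nth i0 (Ordinal aD)) rk_enum_val.
Qed.
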